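(* For every $\mathcal{L}_{\mathrm{Int}}$-formula $A$: $A$ is a theorem of intuitionistic propositional logic if and only if $\mathsf{G}(Tr(A))$ is a theorem of the modal logic $\mathsf{K4}$.
   Context: $\mathcal{L}_{\mathrm{Int}}$-formulae are built from propositional letters and $\bot$ by $\wedge,\vee,\rightarrow$. $\mathsf{K4}$ is the normal modal logic $\mathsf{K}\oplus\Box p\rightarrow\Box\Box p$. Gödel's translation $\mathsf{G}$ from formulae with letters, $\bot,\top,\wedge,\vee,\rightarrow$ to modal formulae: $\mathsf{G}(p)=\Box p$, $\mathsf{G}(\bot)=\bot$, $\mathsf{G}(\top)=\top$, $\mathsf{G}(A\wedge B)=\mathsf{G}(A)\wedge\mathsf{G}(B)$, $\mathsf{G}(A\vee B)=\mathsf{G}(A)\vee\mathsf{G}(B)$, $\mathsf{G}(A\rightarrow B)=\Box(\mathsf{G}(A)\rightarrow\mathsf{G}(B))$. Weight: $w(p)=w(\bot)=2$, $w(A\wedge B)=w(A)(1+w(B))$, $w(A\vee B)=1+w(A)+w(B)$, $w(A\rightarrow B)=1+w(A)w(B)$. For $n\ge1$: $\top^1\rightarrow B:=\top\rightarrow B$, $\top^{n+1}\rightarrow B:=\top\rightarrow(\top^n\rightarrow B)$. Positive/negative translations: for $q$ a letter or $\bot$, $q^{+n}=\top^n\rightarrow q$, $q^{-n}=q$; for $\circ\in\{\wedge,\vee\}$, $(A\circ B)^{+n}=\top^n\rightarrow(A^{+n}\circ B^{+n})$, $(A\circ B)^{-n}=A^{-n}\circ B^{-n}$; $(A\rightarrow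 B)^{+n}=\top^n\rightarrow(A^{-n}\rightarrow B^{+n})$, $(A\rightarrow B)^{-n}=A^{+n}\rightarrow B^{-n}$. The translation is $Tr(A):=A^{+w(A)}$. *)

(* Defs.v *)
From Stdlib Require Import Arith.

Inductive lint : Type :=
| LVar : nat -> lint
| LBot : lint
| LAnd : lint -> lint -> lint
| LOr  : lint -> lint -> lint
| LImp : lint -> lint -> lint.

Inductive tform : Type :=
| TVar : nat -> tform
| TBot : tform
| TTop : tform
| TAnd : tform -> tform -> tform
| TOr  : tform -> tform -> tform
| TImp : tform -> tform -> tform.

Inductive mform : Type :=
| MVar : nat -> mform
| MBot : mform
| MTop : mform
| MAnd : mform -> mform -> mform
| MOr  : mform -> mform -> mform
| MImp : mform -> mform -> mform
| MBox : mform -> mform.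

Inductive IPC_prov : lint -> Prop :=
| ipc_K  : forall a b, IPC_prov (LImp a (LImp b a))
| ipc_S  : forall a b c,
    IPC_prov (LImp (LImp a (LImp b c)) (LImp (LImp a b) (LImp a c)))
| ipc_A1 : forall a b, IPC_prov (LImp (LAnd a b) a)
| ipc_A2 : forall a b, IPC_prov (LImp (LAnd a b) b)
| ipc_A3 : forall a b, IPC_prov (LImp a (LImp b (LAnd a b)))
| ipc_O1 : forall a b, IPC_prov (LImp a (LOr a b))
| ipc_O2 : forall a b, IPC_prov (LImp b (LOr a b))
| ipc_O3 : forall a b c,
    IPC_prov (LImp (LImp a c) (LImp (LImp b c) (LImp (LOr a b) c)))
| ipc_EFQ : forall a, IPC_prov (LImp LBot a)
| ipc_MP : forall a b, IPC_prov (LImp a b) -> IPC_prov a -> IPC_prov b.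

Inductive K4_prov : mform -> Prop :=
| k4_K  : forall a b, K4_prov (MImp a (MImp b a))
| k4_S  : forall a b c,
    K4_prov (MImp (MImp a (MImp b c)) (MImp (MImp a b) (MImp a c)))
| k4_A1 : forall a b, K4_prov (MImp (MAnd a b) a)
| k4_A2 : forall a b, K4_prov (MImp (MAnd a b) b)
| k4_A3 : forall a b, K4_prov (MImp a (MImp b (MAnd a b)))
| k4_O1 : forall a b, K4_prov (MImp a (MOr a b))
| k4_O2 : forall a b, K4_prov (MImp b (MOr a b))
| k4_O3 : forall a b c,
    K4_prov (MImp (MImp a c) (MImp (MImp b c) (MImp (MOr a b) c)))
| k4_EFQ : forall a, K4_prov (MImp MBot a)
| k4_Top : K4_prov MTop
| k4_DNE : forall a, K4_prov (MImp (MImp (MImp a MBot) MBot) a)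
| k4_Kax : forall a b, K4_prov (MImp (MBox (MImp a b)) (MImp (MBox a) (MBox b)))
| k4_4ax : forall a, K4_prov (MImp (MBox a) (MBox (MBox a)))
| k4_MP  : forall a b, K4_prov (MImp a b) -> K4_prov a -> K4_prov b
| k4_Nec : forall a, K4_prov a -> K4_prov (MBox a).

Fixpoint G (A : tform) : mform :=
  match A with
  | TVar p => MBox (MVar p)
  | TBot => MBot
  | TTop => MTop
  | TAnd a b => MAnd (G a) (G b)
  | TOr a b => MOr (G a) (G b)
  | TImp a b => MBox (MImp (G a) (G b))
  end.

Fixpoint w (A : lint) : nat :=
  match A with
  | LVar _ | LBot => 2
  | LAnd a b => w a * (1 + w b)
  | LOr a b => 1 + w a + w b
  | LImp a b => 1 + w a * w b
  end.

(** top^n -> B  (for n >= 1 as in the paper; topimp 0 B = B is never used by Tr). *)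
Fixpoint topimp (n : nat) (B : tform) : tform :=
  match n with
  | 0 => B
  | S m => TImp TTop (topimp m B)
  end.

Fixpoint lint_to_tform (A : lint) : tform :=
  match A with
  | LVar p => TVar p
  | LBot => TBot
  | LAnd a b => TAnd (lint_to_tform a) (lint_to_tform b)
  | LOr a b => TOr (lint_to_tform a) (lint_to_tform b)
  | LImp a b => TImp (lint_to_tform a) (lint_to_tform b)
  end.

(** Positive (b = true) and negative (b = false) translations A^{+n}, A^{-n}. *)
Fixpoint pn (n : nat) (b : bool) (A : lint) : tform :=
  match A with
  | LVar p => if b then topimp n (TVar p) else TVar p
  | LBot => if b then topimp n TBot else TBot
  | LAnd x y => if b then topimp n (TAnd (pn n true x) (pn n true y))
                else TAnd (pn n false x) (pn n false y)
  | LOr x y => if b then topimp n (TOr (pn n true x) (pn n true y))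
               else TOr (pn n false x) (pn n false y)
  | LImp x y => if b then topimp n (TImp (pn n false x) (pn n true y))
                else TImp (pn n true x) (pn n false y)
  end.

Definition pos (n : nat) (A : lint) : tform := pn n true A.
Definition neg (n : nat) (A : lint) : tform := pn n false A.

Definition Tr (A : lint) : tform := pos (w A) A.

(* Main.v *)
Require Import Defs.
From Stdlib Require Import Arith Lia List Classical ClassicalEpsilon Cantor.
Import ListNotations.

Section Hilbert.
Variable F : Type.
Variable imp : F -> F -> F.
Variable Thm : F -> Prop.
Hypothesis thK : forall a b, Thm (imp a (imp b a)).
Hypothesis thS : forall a b c, Thm (imp (imp a (imp b c)) (imp (imp a b) (imp a c))).
Hypothesis thMP : forall a b, Thm (imp a b) -> Thm a -> Thm b.
Variable code : F -> nat.
Hypothesis code_inj : forall a b, code a = code b -> a = b.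

Inductive Der (G : F -> Prop) : F -> Prop :=
| Dhyp : forall x, G x -> Der G x
| Dthm : forall x, Thm x -> Der G x
| Dmp : forall a b, Der G (imp a b) -> Der G a -> Der G b.

Lemma Der_mono (G H : F -> Prop) a : (forall x, G x -> H x) -> Der G a -> Der H a.
Proof. intros HGH D; induction D; [apply Dhyp; auto | apply Dthm; auto | eapply Dmp; eauto]. Qed.

Lemma Der_I G a : Der G (imp a a).
Proof.
  eapply Dmp; [eapply Dmp; [apply Dthm, (thS a (imp a a) a)| apply Dthm, thK] | apply Dthm, thK].
Qed.

Lemma deduction G a b : Der (fun y => G y \/ y = a) b -> Der G (imp a b).
Proof.
  intro D; induction D as [x [Hx|Hx]|x Hx|x y D1 IH1 D2 IH2].
  - eapply Dmp; [apply Dthm, thK | apply Dhyp; auto].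
  - subst; apply Der_I.
  - eapply Dmp; [apply Dthm, thK | apply Dthm; auto].
  - eapply Dmp; [eapply Dmp; [apply Dthm, thS | exact IH1] | exact IH2].
Qed.

Lemma Der_empty a : Der (fun _ => False) a -> Thm a.
Proof. intro D; induction D; [contradiction | auto | eauto]. Qed.

Fixpoint chain (G0 : F -> Prop) (c : F) (n : nat) : F -> Prop :=
  match n with
  | 0 => G0
  | S m => fun x => chain G0 c m x \/ (code x = m /\ ~ Der (fun y => chain G0 c m y \/ y = x) c)
  end.

Definition lim G0 c x := exists n, chain G0 c n x.

Lemma chain_mono G0 c n m x : n <= m -> chain G0 c n x -> chain G0 c m x.
Proof. induction 1; simpl; auto. Qed.

Lemma lim_compact G0 c a : Der (lim G0 c) a -> exists n, Der (chain G0 c n) a.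
Proof.
  intro D; induction D as [x [n Hx]|x Hx|x y D1 [n1 IH1] D2 [n2 IH2]].
  - exists n; apply Dhyp; auto.
  - exists 0; apply Dthm; auto.
  - exists (max n1 n2); eapply Dmp.
    + eapply Der_mono; [|exact IH1]; intros; eapply chain_mono; [|eauto]; lia.
    + eapply Der_mono; [|exact IH2]; intros; eapply chain_mono; [|eauto]; lia.
Qed.

Lemma chain_cons G0 c : ~ Der G0 c -> forall n, ~ Der (chain G0 c n) c.
Proof.
  intros H0 n; induction n as [|n IH]; simpl; auto.
  intro D.
  destruct (classic (exists x, code x = n /\ ~ Der (fun y => chain G0 c n y \/ y = x) c)) as [[x [Hc Hx]]|Hn].
  - apply Hx; eapply Der_mono; [|exact D]; simpl.
    intros y [Hy|[Hy _]]; auto. right; apply code_inj; congruence.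
  - apply IH; eapply Der_mono; [|exact D]; simpl.
    intros y [Hy|[Hy Hy']]; auto. exfalso; apply Hn; eauto.
Qed.

Lemma lim_cons G0 c : ~ Der G0 c -> ~ Der (lim G0 c) c.
Proof. intros H D; destruct (lim_compact _ _ _ D) as [n Dn]; eapply chain_cons; eauto. Qed.

Lemma lim_max G0 c phi : ~ lim G0 c phi -> Der (fun y => lim G0 c y \/ y = phi) c.
Proof.
  intro H.
  assert (D : Der (fun y => chain G0 c (code phi) y \/ y = phi) c).
  { apply NNPP; intro Hn; apply H; exists (S (code phi)); simpl; auto. }
  eapply Der_mono; [|exact D]; intros y [Hy|Hy]; [left; exists (code phi)|]; auto.
Qed.

Lemma lim_closed G0 c phi : ~ Der G0 c -> Der (lim G0 c) phi -> lim G0 c phi.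
Proof.
  intros H0 D; apply NNPP; intro Hn.
  apply (lim_cons _ _ H0); eapply Dmp; [apply deduction, lim_max, Hn | exact D].
Qed.

Lemma lim_incl G0 c x : G0 x -> lim G0 c x.
Proof. intro; exists 0; auto. Qed.

End Hilbert.

Lemma to_nat_inj p q : to_nat p = to_nat q -> p = q.
Proof. intros H. rewrite <- (cancel_of_to p), <- (cancel_of_to q), H. reflexivity. Qed.

Fixpoint code_l (A : lint) : nat :=
  match A with
  | LVar n => to_nat (0, n)
  | LBot => to_nat (1, 0)
  | LAnd a b => to_nat (2, to_nat (code_l a, code_l b))
  | LOr a b => to_nat (3, to_nat (code_l a, code_l b))
  | LImp a b => to_nat (4, to_nat (code_l a, code_l b))
  end.

Ltac inj_tac := repeat match goal with
  | H : to_nat _ = to_nat _ |- _ => apply to_nat_inj, pair_equal_spec in H; destruct H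
  end.

Lemma code_l_inj : forall a b, code_l a = code_l b -> a = b.
Proof.
  induction a; destruct b; cbn [code_l]; intro H; inj_tac; try discriminate; subst; try reflexivity;
  try (f_equal; auto; fail).
  all: try congruence.
Qed.

Fixpoint code_m (A : mform) : nat :=
  match A with
  | MVar n => to_nat (0, n)
  | MBot => to_nat (1, 0)
  | MTop => to_nat (5, 0)
  | MAnd a b => to_nat (2, to_nat (code_m a, code_m b))
  | MOr a b => to_nat (3, to_nat (code_m a, code_m b))
  | MImp a b => to_nat (4, to_nat (code_m a, code_m b))
  | MBox a => to_nat (6, code_m a)
  end.

Lemma code_m_inj : forall a b, code_m a = code_m b -> a = b.
Proof.
  induction a; destruct b; cbn [code_l code_m]; intro H; inj_tac; try discriminate; subst; try reflexivity;
  f_equal; auto.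
Qed.

Fixpoint sat {W : Type} (R : W -> W -> Prop) (V : W -> nat -> Prop) (x : W) (f : mform) : Prop :=
  match f with
  | MVar p => V x p
  | MBot => False
  | MTop => True
  | MAnd a b => sat R V x a /\ sat R V x b
  | MOr a b => sat R V x a \/ sat R V x b
  | MImp a b => sat R V x a -> sat R V x b
  | MBox a => forall y, R x y -> sat R V y a
  end.

Definition trans {W : Type} (R : W -> W -> Prop) := forall x y z, R x y -> R y z -> R x z.
Definition refl {W : Type} (R : W -> W -> Prop) := forall x, R x x.
Definition vpers {W : Type} (R : W -> W -> Prop) (V : W -> nat -> Prop) :=
  forall x y p, R x y -> V x p -> V y p.

Lemma K4_sound {W : Type} (R : W -> W -> Prop) V f :
  trans R -> K4_prov f -> forall x, sat R V x f.
Proof.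
  intros HT P; induction P; intros x; simpl in *; try tauto; eauto.
  all: try (intros H; apply NNPP; tauto).
Qed.

Fixpoint Rn {W : Type} (R : W -> W -> Prop) (n : nat) (x y : W) : Prop :=
  match n with
  | 0 => x = y
  | S k => exists z, R x z /\ Rn R k z y
  end.

Lemma sat_topimp {W : Type} (R : W -> W -> Prop) V n B x :
  sat R V x (G (topimp n B)) <-> forall y, Rn R n x y -> sat R V y (G B).
Proof.
  revert x; induction n as [|n IH]; intros x; simpl.
  - split; [intros H y <-; auto | intros H; apply H; auto].
  - split.
    + intros H y [z [Hz Hzy]]. apply (proj1 (IH z)); auto.
    + intros H z Hz _. apply (proj2 (IH z)); intros y Hy; apply H; eauto.
Qed.

Lemma Rn_R {W : Type} (R : W -> W -> Prop) n x y : trans R -> Rn R n x y -> x = y \/ R x y.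
Proof.
  intros HT; revert x; induction n as [|n IH]; intros x; simpl; auto.
  intros [z [Hz Hzy]]; destruct (IH _ Hzy) as [<-|H]; right; eauto.
Qed.

Lemma G_persist {W : Type} (R : W -> W -> Prop) V t x y :
  trans R -> R x y -> sat R V x (G t) -> sat R V y (G t).
Proof.
  intros HT Hxy; revert x y Hxy; induction t; intros x y Hxy; simpl; try tauto; eauto.
  - intros [H1 H2]; split; eauto.
  - intros [H1|H2]; [left|right]; eauto.
Qed.

Fixpoint frc {W : Type} (le : W -> W -> Prop) (V : W -> nat -> Prop) (x : W) (A : lint) : Prop :=
  match A with
  | LVar p => V x p
  | LBot => False
  | LAnd a b => frc le V x a /\ frc le V x b
  | LOr a b => frc le V x a \/ frc le V x b
  | LImp a b => forall y, le x y -> frc le V y a -> frc le V y b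
  end.

Lemma frc_persist {W : Type} (le : W -> W -> Prop) V A x y :
  trans le -> vpers le V -> le x y -> frc le V x A -> frc le V y A.
Proof.
  intros HT HV; revert x y; induction A; intros x y Hxy; simpl; eauto.
  - intros [H1 H2]; split; eauto.
  - intros [H1|H2]; [left|right]; eauto.
Qed.

Lemma IPC_sound {W : Type} (le : W -> W -> Prop) V A :
  refl le -> trans le -> vpers le V -> IPC_prov A -> forall x, frc le V x A.
Proof.
  intros HR HT HV P; induction P; intros x; simpl in *.
  - intros y Hy Ha z Hz _; eapply frc_persist; eauto.
  - intros y Hy H1 z Hz H2 u Hu H3.
    eapply (H1 u); eauto.
  - intros y _ [H1 H2]; auto.
  - intros y _ [H1 H2]; auto.
  - intros y _ H1 z Hz H2; split; auto; eapply frc_persist; eauto.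
  - intros y _ H; auto.
  - intros y _ H; auto.
  - intros y _ H1 z Hz H2 u Hu [H3|H3].
    + apply (H1 u); eauto.
    + apply (H2 u); eauto.
  - intros y _ [].
  - apply (IHP1 x x); auto.
Qed.

Lemma topimp_refl {W : Type} (R : W -> W -> Prop) V n B x :
  refl R -> trans R -> sat R V x (G (topimp n B)) <-> sat R V x (G B).
Proof.
  intros HR HT; rewrite sat_topimp; split.
  - intros H; apply H. clear H; induction n; simpl; eauto.
  - intros H y Hy; destruct (Rn_R _ _ _ _ HT Hy) as [<-|Hxy]; auto.
    eapply G_persist; eauto.
Qed.

Lemma G_preorder {W : Type} (R : W -> W -> Prop) V C :
  refl R -> trans R -> vpers R V ->
  forall n b x, sat R V x (G (pn n b C)) <-> frc R V x C.
Proof.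
  intros HR HT HV; induction C; intros k b x; destruct b; cbn [pn];
    try rewrite topimp_refl by auto; simpl.
  all: try (split; [intros H; apply H; auto | intros H y Hy; eapply HV; eauto]; fail).
  all: try tauto.
  all: try (rewrite IHC1, IHC2; tauto).
  all: split; intros H y Hy; specialize (H y Hy);
       rewrite ?IHC1, ?IHC2 in *; exact H.
Qed.

Definition DI := Der lint LImp IPC_prov.
Lemma DI_ded G a b : DI (fun y => G y \/ y = a) b -> DI G (LImp a b).
Proof. exact (deduction _ _ _ ipc_K ipc_S G a b). Qed.
Lemma DI_mp G a b : DI G (LImp a b) -> DI G a -> DI G b.
Proof. apply Dmp. Qed.
Lemma DI_ax G a : IPC_prov a -> DI G a.
Proof. apply Dthm. Qed.
Lemma DI_hyp (G : lint -> Prop) a : G a -> DI G a.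
Proof. apply Dhyp. Qed.

Definition worldI (G : lint -> Prop) :=
  (forall a, DI G a -> G a) /\ (forall a b, G (LOr a b) -> G a \/ G b) /\ ~ G LBot.
Definition WI := { G : lint -> Prop | worldI G }.
Definition leI (x y : WI) := forall a, proj1_sig x a -> proj1_sig y a.
Definition VI (x : WI) p := proj1_sig x (LVar p).

Lemma buildI G0 c : ~ DI G0 c -> exists D : WI, (forall a, G0 a -> proj1_sig D a) /\ ~ proj1_sig D c.
Proof.
  intros H0.
  set (L := lim lint LImp IPC_prov code_l G0 c).
  assert (Hcl : forall a, DI L a -> L a) by (intros a; exact (lim_closed _ _ _ ipc_K ipc_S _ code_l_inj G0 c a H0)).
  assert (Hcons : ~ DI L c) by exact (lim_cons _ _ _ _ code_l_inj G0 c H0).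
  assert (Hw : worldI L).
  { split; [exact Hcl|split].
    - intros a b Hab. apply NNPP; intro Hn.
      apply Hcons.
      assert (Ha : DI L (LImp a c)) by (apply DI_ded, lim_max; tauto).
      assert (Hb : DI L (LImp b c)) by (apply DI_ded, lim_max; tauto).
      eapply DI_mp; [eapply DI_mp; [eapply DI_mp; [apply DI_ax, ipc_O3|exact Ha]|exact Hb]|apply DI_hyp, Hab].
    - intro Hb; apply Hcons; eapply DI_mp; [apply DI_ax, ipc_EFQ|apply DI_hyp, Hb]. }
  exists (exist _ L Hw); simpl; split.
  - intros a Ha; apply lim_incl; auto.
  - intro Hc; apply Hcons, DI_hyp, Hc.
Qed.

Lemma truthI A : forall x : WI, frc leI VI x A <-> proj1_sig x A.
Proof.
  induction A as [p| |a IHa b IHb|a IHa b IHb|a IHa b IHb]; intros [X [Hcl [Hpr Hcons]]]; simpl in *.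
  - unfold VI; simpl; tauto.
  - tauto.
  - rewrite IHa, IHb; simpl; split.
    + intros [Ha Hb]; apply Hcl; eapply DI_mp; [eapply DI_mp; [apply DI_ax, ipc_A3|apply DI_hyp, Ha]|apply DI_hyp, Hb].
    + intros H; split; apply Hcl; (eapply DI_mp; [apply DI_ax|apply DI_hyp, H]); [apply ipc_A1|apply ipc_A2].
  - rewrite IHa, IHb; simpl; split.
    + intros [Ha|Hb]; apply Hcl; (eapply DI_mp; [apply DI_ax|apply DI_hyp; eauto]); [apply ipc_O1|apply ipc_O2].
    + apply Hpr.
  - split.
    + intros H. apply NNPP; intro Hn.
      assert (Hnd : ~ DI (fun y => X y \/ y = a) b).
      { intro D; apply Hn, Hcl, DI_ded, D. }
      destruct (buildI _ _ Hnd) as [D [HD1 HD2]].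
      apply HD2. apply (IHb D). apply (H D).
      * intros c Hc; apply HD1; auto.
      * apply IHa; apply HD1; auto.
    + intros H y Hy Ha. rewrite IHa in Ha; rewrite IHb.
      destruct y as [Y [HclY ?]]; simpl in *.
      apply HclY; eapply DI_mp; [apply DI_hyp, Hy, H|apply DI_hyp, Ha].
Qed.

Lemma IPC_complete A : ~ IPC_prov A -> exists x : WI, ~ frc leI VI x A.
Proof.
  intros H.
  assert (H0 : ~ DI (fun _ => False) A) by (intro D; apply H, (Der_empty _ _ _ ipc_MP), D).
  destruct (buildI _ _ H0) as [D [_ HD]]; exists D; rewrite truthI; auto.
Qed.

Lemma leI_refl : refl leI. Proof. intros x a; auto. Qed.
Lemma leI_trans : trans leI. Proof. intros x y z H1 H2 a Ha; auto. Qed.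
Lemma VI_pers : vpers leI VI. Proof. intros x y p H; apply H. Qed.

Definition DK := Der mform MImp K4_prov.
Lemma DK_ded G a b : DK (fun y => G y \/ y = a) b -> DK G (MImp a b).
Proof. exact (deduction _ _ _ k4_K k4_S G a b). Qed.
Lemma DK_mp G a b : DK G (MImp a b) -> DK G a -> DK G b.
Proof. apply Dmp. Qed.
Lemma DK_ax G a : K4_prov a -> DK G a.
Proof. apply Dthm. Qed.
Lemma DK_hyp (G : mform -> Prop) a : G a -> DK G a.
Proof. apply Dhyp. Qed.

Definition worldK (G : mform -> Prop) :=
  (forall a, DK G a -> G a) /\ ~ G MBot /\ (forall a, G a \/ G (MImp a MBot)).
Definition WK := { G : mform -> Prop | worldK G }.
Definition RK (x y : WK) := forall a, proj1_sig x (MBox a) -> proj1_sig y a.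
Definition VK (x : WK) p := proj1_sig x (MVar p).

Lemma buildK G0 : ~ DK G0 MBot -> exists D : WK, (forall a, G0 a -> proj1_sig D a).
Proof.
  intros H0.
  set (L := lim mform MImp K4_prov code_m G0 MBot).
  assert (Hcl : forall a, DK L a -> L a) by (intros a; exact (lim_closed _ _ _ k4_K k4_S _ code_m_inj G0 MBot a H0)).
  assert (Hcons : ~ DK L MBot) by exact (lim_cons _ _ _ _ code_m_inj G0 MBot H0).
  assert (Hw : worldK L).
  { split; [exact Hcl|split].
    - intro Hb; apply Hcons, DK_hyp, Hb.
    - intros a; destruct (classic (L a)) as [Ha|Ha]; [left; auto|right].
      apply Hcl, DK_ded, lim_max, Ha. }
  exists (exist _ L Hw); simpl.
  intros a Ha; apply lim_incl; auto.
Qed.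

Lemma box_lemma (X : mform -> Prop) a : DK (fun y => X (MBox y)) a -> DK X (MBox a).
Proof.
  intro D; induction D as [x Hx|x Hx|x y D1 IH1 D2 IH2].
  - apply DK_hyp, Hx.
  - apply DK_ax, k4_Nec, Hx.
  - eapply DK_mp; [eapply DK_mp; [apply DK_ax, k4_Kax|exact IH1]|exact IH2].
Qed.

Lemma RK_trans : trans RK.
Proof.
  intros [X [HX ?]] y z H1 H2 b Hb; apply H2, H1; simpl in *.
  apply HX; eapply DK_mp; [apply DK_ax, k4_4ax|apply DK_hyp, Hb].
Qed.

Lemma truthK f : forall x : WK, sat RK VK x f <-> proj1_sig x f.
Proof.
  induction f as [p| | |a IHa b IHb|a IHa b IHb|a IHa b IHb|a IHa]; intros x;
  pose proof (proj2_sig x) as [Hcl [Hcons Hcomp]]; set (X := proj1_sig x) in *; simpl.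
  - unfold VK; tauto.
  - tauto.
  - split; auto; intros _; apply Hcl, DK_ax, k4_Top.
  - rewrite IHa, IHb; split.
    + intros [Ha Hb]; apply Hcl; eapply DK_mp; [eapply DK_mp; [apply DK_ax, k4_A3|apply DK_hyp, Ha]|apply DK_hyp, Hb].
    + intros H; split; apply Hcl; (eapply DK_mp; [apply DK_ax|apply DK_hyp, H]); [apply k4_A1|apply k4_A2].
  - rewrite IHa, IHb; split.
    + intros [Ha|Hb]; apply Hcl; (eapply DK_mp; [apply DK_ax|apply DK_hyp; eauto]); [apply k4_O1|apply k4_O2].
    + intros H; apply NNPP; intro Hn.
      destruct (Hcomp a) as [Ha|Ha]; [tauto|].
      destruct (Hcomp b) as [Hb|Hb]; [tauto|].
      apply Hcons, Hcl.
      eapply DK_mp; [eapply DK_mp; [eapply DK_mp; [apply DK_ax, k4_O3|apply DK_hyp, Ha]|apply DK_hyp, Hb]|apply DK_hyp, H].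
  - rewrite IHa, IHb; split.
    + intros H. destruct (classic (X a)) as [Ha|Ha].
      * apply Hcl; eapply DK_mp; [apply DK_ax, k4_K|apply DK_hyp; exact (H Ha)].
      * destruct (Hcomp a) as [Ha'|Ha']; [tauto|].
        apply Hcl, DK_ded. eapply DK_mp; [apply DK_ax, k4_EFQ|].
        eapply DK_mp; [apply DK_hyp; left; exact Ha'|apply DK_hyp; right; reflexivity].
    + intros H Ha; apply Hcl; eapply DK_mp; [apply DK_hyp, H|apply DK_hyp, Ha].
  - split.
    + intros H; apply NNPP; intro Hn.
      assert (Hs : ~ DK (fun y => X (MBox y)) a) by (intro D; apply Hn, Hcl, box_lemma, D).
      assert (H0 : ~ DK (fun y => X (MBox y) \/ y = MImp a MBot) MBot).
      { intro D; apply Hs. eapply DK_mp; [apply DK_ax, k4_DNE|apply DK_ded, D]. }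
      destruct (buildK _ H0) as [D HD].
      assert (HRD : RK x D) by (intros c Hc; apply HD; left; exact Hc).
      pose proof (proj2_sig D) as [HclD [HconsD _]].
      apply HconsD, HclD. eapply DK_mp; [apply DK_hyp, HD; right; reflexivity|].
      apply DK_hyp, IHa, H, HRD.
    + intros H y Hy; apply IHa, Hy, H.
Qed.

Lemma K4_complete f : ~ K4_prov f -> exists x : WK, ~ sat RK VK x f.
Proof.
  intros H.
  assert (H0 : ~ DK (fun y => y = MImp f MBot) MBot).
  { intro D; apply H. apply (Der_empty _ _ _ k4_MP).
    eapply DK_mp; [apply DK_ax, k4_DNE|apply DK_ded].
    eapply Der_mono; [|exact D]; simpl; auto. }
  destruct (buildK _ H0) as [D HD]; exists D; rewrite truthK.
  pose proof (proj2_sig D) as [HclD [HconsD _]].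
  intro Hf; apply HconsD, HclD; eapply DK_mp; [apply DK_hyp, HD; reflexivity|apply DK_hyp, Hf].
Qed.

Fixpoint subs (A : lint) : list lint :=
  A :: match A with
       | LAnd a b | LOr a b | LImp a b => subs a ++ subs b
       | _ => []
       end.

Lemma w_ge2 A : 2 <= w A.
Proof. induction A; simpl; nia. Qed.

Lemma subs_w A : length (subs A) < w A.
Proof.
  induction A; simpl; rewrite ?length_app; auto;
  pose proof (w_ge2 A1); pose proof (w_ge2 A2); nia.
Qed.

Section Core.
Variable W : Type.
Variable R : W -> W -> Prop.
Variable V : W -> nat -> Prop.
Hypothesis HT : trans R.
Variable n : nat.
Variable A : lint.

Definition np C x := sat R V x (G (pn n false C)).
Definition pp C x := sat R V x (G (pn n true C)).

Definition stable u := exists u', R u u' /\ forall C, In C (subs A) -> np C u' -> np C u.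

Fixpoint cnt (l : list lint) (x : W) : nat :=
  match l with
  | [] => 0
  | C :: l' => (if excluded_middle_informative (np C x) then 1 else 0) + cnt l' x
  end.

Lemma np_persist C x y : R x y -> np C x -> np C y.
Proof. apply G_persist, HT. Qed.

Lemma cnt_mono l x y : R x y -> cnt l x <= cnt l y.
Proof.
  intros Hxy; induction l as [|C l IH]; simpl; auto.
  destruct (excluded_middle_informative (np C x)); destruct (excluded_middle_informative (np C y)); try lia.
  exfalso; eauto using np_persist.
Qed.

Lemma cnt_le l x : cnt l x <= length l.
Proof.
  induction l as [|C l IH]; simpl; auto.
  destruct (excluded_middle_informative (np C x)); lia.
Qed.

Lemma cnt_eq l x y : R x y -> cnt l x = cnt l y -> forall C, In C l -> np C y -> np C x.
Proof.
  intros Hxy; induction l as [|D l IH]; simpl; [tauto|].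
  pose proof (cnt_mono l x y Hxy).
  destruct (excluded_middle_informative (np D x)); destruct (excluded_middle_informative (np D y));
    intros He C [<-|HC] Hy; auto; try tauto; try (apply IH; auto; lia).
  all: try (exfalso; eauto using np_persist; fail).
  all: try lia.
Qed.

Lemma chain_stable k : forall v z, Rn R k v z -> cnt (subs A) z < cnt (subs A) v + k ->
  exists u, (u = v \/ R v u) /\ R u z /\ stable u.
Proof.
  induction k as [|k IH]; intros v z; simpl.
  - intros <-; lia.
  - intros [y [Hvy Hyz]] Hc.
    assert (Hvz : R v z) by (destruct (Rn_R _ _ _ _ HT Hyz) as [<-|H]; eauto).
    destruct (classic (cnt (subs A) v = cnt (subs A) y)) as [He|Hne].
    + exists v; split; auto; split; auto.
      exists y; split; auto. apply cnt_eq; auto.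
    + pose proof (cnt_mono (subs A) v y Hvy).
      destruct (IH y z Hyz) as [u [Hu1 [Hu2 Hu3]]]; [lia|].
      exists u; split; [right; destruct Hu1 as [<-|Hu1]; eauto|auto].
Qed.

Hypothesis Hn : length (subs A) < n.

Lemma chain_n v z : Rn R n v z -> exists u, (u = v \/ R v u) /\ R u z /\ stable u.
Proof.
  intros H; apply (chain_stable n v z H).
  pose proof (cnt_le (subs A) z); lia.
Qed.

Definition WS := { u : W | stable u }.
Definition leS (a b : WS) := proj1_sig a = proj1_sig b \/ R (proj1_sig a) (proj1_sig b).
Definition VS (a : WS) p := sat R V (proj1_sig a) (MBox (MVar p)).

Lemma leS_refl : refl leS. Proof. intros x; left; auto. Qed.
Lemma leS_trans : trans leS.
Proof.
  intros x y z [H1|H1] [H2|H2]; unfold leS; try (rewrite H1); try (rewrite <- H2); auto.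
  right; eauto.
Qed.
Lemma VS_pers : vpers leS VS.
Proof.
  intros x y p [H|H]; unfold VS; [rewrite H; auto|].
  intros Hx; apply (G_persist R V (TVar p) _ _ HT H Hx).
Qed.

Lemma le_R (u : WS) (y : W) : R (proj1_sig u) y -> stable y -> exists y' : WS, proj1_sig y' = y /\ leS u y'.
Proof. intros H Hs; exists (exist _ y Hs); split; [reflexivity|right; exact H]. Qed.

Lemma core C : incl (subs C) (subs A) ->
  (forall u : WS, np C (proj1_sig u) -> frc leS VS u C) /\
  (forall v, ~ pp C v -> exists u : WS, (proj1_sig u = v \/ R v (proj1_sig u)) /\ ~ frc leS VS u C).
Proof.
  induction C as [p| |a IHa b IHb|a IHa b IHb|a IHa b IHb]; intros Hinc.
  - split.
    + intros u H; exact H.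
    + intros v H. unfold pp in H; cbn [pn] in H; rewrite sat_topimp in H.
      apply NNPP; intro Hno; apply H; intros y Hy w0 Hw0; apply NNPP; intro Hv.
      destruct (chain_n _ _ Hy) as [u [Hu1 [Hu2 Hu3]]].
      apply Hno; exists (exist _ u Hu3); simpl; split; auto.
      intro Hf; apply Hv, Hf; eauto.
  - split.
    + intros u [].
    + intros v H. unfold pp in H; cbn [pn] in H; rewrite sat_topimp in H.
      apply NNPP; intro Hno; apply H; intros y Hy.
      destruct (chain_n _ _ Hy) as [u [Hu1 [Hu2 Hu3]]].
      apply Hno; exists (exist _ u Hu3); simpl; split; auto.
  - assert (Ia : incl (subs a) (subs A)) by (intros x Hx; apply Hinc; simpl; rewrite in_app_iff; auto).
    assert (Ib : incl (subs b) (subs A)) by (intros x Hx; apply Hinc; simpl; rewrite in_app_iff; auto).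
    destruct (IHa Ia) as [Na Pa]; destruct (IHb Ib) as [Nb Pb].
    split.
    + intros u [H1 H2]; simpl; split; auto.
    + intros v H. unfold pp in H; cbn [pn] in H; rewrite sat_topimp in H.
      apply NNPP; intro Hno; apply H; intros y Hy.
      assert (Hvy : v = y \/ R v y) by (eapply Rn_R; eauto).
      split; apply NNPP; intro Hc; [destruct (Pa y Hc) as [u [Hu1 Hu2]]|destruct (Pb y Hc) as [u [Hu1 Hu2]]];
        apply Hno; exists u; (split; [destruct Hvy as [<-|Hvy]; [auto|destruct Hu1 as [<-|Hu1]; eauto]|]);
        simpl; tauto.
  - assert (Ia : incl (subs a) (subs A)) by (intros x Hx; apply Hinc; simpl; rewrite in_app_iff; auto).
    assert (Ib : incl (subs b) (subs A)) by (intros x Hx; apply Hinc; simpl; rewrite in_app_iff; auto).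
    destruct (IHa Ia) as [Na Pa]; destruct (IHb Ib) as [Nb Pb].
    split.
    + intros u [H1|H2]; simpl; auto.
    + intros v H. unfold pp in H; cbn [pn] in H; rewrite sat_topimp in H.
      apply NNPP; intro Hno; apply H; intros y Hy.
      apply NNPP; intros Hab.
      assert (Hya : ~ pp a y) by (intro; apply Hab; left; auto).
      assert (Hyb : ~ pp b y) by (intro; apply Hab; right; auto).
      destruct (Pa y Hya) as [u1 [Hu11 Hu12]]; destruct (Pb y Hyb) as [u2 [Hu21 Hu22]].
      destruct (chain_n _ _ Hy) as [u [Hu1 [Hu2 Hu3]]].
      apply Hno; exists (exist _ u Hu3); simpl; split; auto.
      intros [Hf|Hf].
      * apply Hu12; eapply (frc_persist leS VS a (exist _ u Hu3)); eauto using leS_trans, VS_pers.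
        right; simpl; destruct Hu11 as [<-|Hu11]; eauto.
      * apply Hu22; eapply (frc_persist leS VS b (exist _ u Hu3)); eauto using leS_trans, VS_pers.
        right; simpl; destruct Hu21 as [<-|Hu21]; eauto.
  - assert (Ia : incl (subs a) (subs A)) by (intros x Hx; apply Hinc; simpl; rewrite in_app_iff; auto).
    assert (Ib : incl (subs b) (subs A)) by (intros x Hx; apply Hinc; simpl; rewrite in_app_iff; auto).
    assert (Inb : In b (subs A)) by (apply Ib; destruct b; simpl; auto).
    destruct (IHa Ia) as [Na Pa]; destruct (IHb Ib) as [Nb Pb].
    split.
    + intros u H y Huy Hya.
      assert (Hpa : pp a (proj1_sig y)).
      { apply NNPP; intro Hc; destruct (Pa _ Hc) as [u3 [Hu31 Hu32]].
        apply Hu32; eapply (frc_persist leS VS a y); eauto using leS_trans, VS_pers.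
        destruct Hu31; [left|right]; auto. }
      apply Nb.
      destruct Huy as [Heq|Huy].
      * destruct (proj2_sig u) as [u' [Ruu' Hst]].
        rewrite <- Heq. apply Hst; auto.
        apply H; auto. rewrite Heq in Ruu'. eapply G_persist; eauto.
      * apply H; auto.
    + intros v H. unfold pp in H; cbn [pn] in H; rewrite sat_topimp in H.
      apply NNPP; intro Hno; apply H; intros y Hy t Ht Hna.
      apply NNPP; intros Hpb.
      destruct (Pb t Hpb) as [u [Hu1 Hu2]].
      destruct (chain_n _ _ Hy) as [u0 [Hu01 [Hu02 Hu03]]].
      apply Hno; exists (exist _ u0 Hu03); simpl; split; auto.
      intros Hf; apply Hu2, Hf.
      * right; simpl; destruct Hu1 as [<-|Hu1]; eauto.
      * apply Na. destruct Hu1 as [<-|Hu1]; auto. eapply G_persist; eauto.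
Qed.

End Core.

Theorem mainTheorem14 (A : lint) : IPC_prov A <-> K4_prov (G (Tr A)).
Proof.
  split.
  - intros HP. apply NNPP; intro Hn.
    destruct (K4_complete _ Hn) as [x Hx].
    destruct (core WK RK VK RK_trans (w A) A (subs_w A) A (incl_refl _)) as [_ Pos].
    destruct (Pos x Hx) as [u [_ Hu]].
    apply Hu. apply IPC_sound; auto using leS_refl, leS_trans, VS_pers, RK_trans.
  - intros HK. apply NNPP; intro Hn.
    destruct (IPC_complete _ Hn) as [x Hx].
    apply Hx.
    pose proof (K4_sound leI VI _ leI_trans HK x) as H.
    unfold Tr, pos in H.
    apply (G_preorder leI VI A leI_refl leI_trans VI_pers (w A) true x); exact H.
Qed.
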